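(* Let $\beta>0$, $\bar\mu\in\mathbb{R}^{N\times p}$, $g\in C^3(\mathbb{R})$, $m=g\circ G_\beta$, and for indices $k=(k_1,k_2,k_3)\in[N]^3$, $j=(j_1,j_2,j_3)\in[p]^3$ and $x\in\mathbb{R}^{N\times p}$ define $$U_{(k,j)}(x)=\sup\Big\{\Big|\frac{\partial^3m}{\partial X_{k_1j_1}\partial X_{k_2j_2}\partial X_{k_3j_3}}(x+y)\Big|:y\in\mathbb{R}^{N\times p},\ \|y\|_\infty\le\beta^{-1}\Big\}.$$ Then for every $x\in\mathbb{R}^{N\times p}$, $$\sum_{(k,j)\in[N]^3\times[p]^3}U_{(k,j)}(x)\le e^{12}\{\|g'''\|_\infty+16\beta\|g''\|_\infty+24\beta^2\|g'\|_\infty\}.$$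
   Context: For $k\in[N]$ and $v\in\mathbb{R}^p$, $F_{\beta,\bar\mu_k}(v)=\beta^{-1}\log\big(\sum_{j=1}^p\exp(\beta\{v_j+\bar\mu_{kj}\})\big)$; for $X\in\mathbb{R}^{N\times p}$ with rows $X_{1\cdot},\dots,X_{N\cdot}$, $F_{\beta,\bar\mu}(X)=(F_{\beta,\bar\mu_1}(X_{1\cdot}),\dots,F_{\beta,\bar\mu_N}(X_{N\cdot}))'\in\mathbb{R}^N$; for $u\in\mathbb{R}^N$, $F_{\beta,0}(u)=\beta^{-1}\log\sum_{k=1}^N\exp(\beta u_k)$; $G_\beta(X)=-F_{\beta,0}(-F_{\beta,\bar\mu}(X))$. $\|y\|_\infty=\max_{k,j}|y_{kj}|$ and $\|g^{(r)}\|_\infty=\sup_t|g^{(r)}(t)|$. *)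

(* Defs.v *)
From HB Require Import structures.
From mathcomp Require Import all_boot all_order all_algebra.
From mathcomp Require Import all_classical all_reals all_analysis.
Set Implicit Arguments. Unset Strict Implicit. Unset Printing Implicit Defensive.
Import Order.TTheory GRing.Theory Num.Theory numFieldNormedType.Exports.
Local Open Scope ring_scope.

Section Defs.
Variable R : realType.

Definition Fmuk (N p : nat) (beta : R) (mu : 'M[R]_(N, p)) (k : 'I_N)
  (v : 'I_p -> R) : R :=
  beta^-1 * ln (\sum_(j < p) expR (beta * (v j + mu k j))).

Definition F0 (N : nat) (beta : R) (u : 'I_N -> R) : R :=
  beta^-1 * ln (\sum_(k < N) expR (beta * u k)).

Definition Gbeta (N p : nat) (beta : R) (mu : 'M[R]_(N, p)) (X : 'M[R]_(N, p)) : R :=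
  - F0 beta (fun k => - Fmuk beta mu k (fun j => X k j)).

Definition partial (N p : nat) (k : 'I_N) (j : 'I_p)
  (f : 'M[R]_(N, p) -> R) : 'M[R]_(N, p) -> R :=
  fun x => derive1 (fun t : R => f (x + t *: delta_mx k j)) 0.

Definition C3 (g : R -> R) : Prop :=
  (forall n, (n < 3)%N -> forall x, derivable (derive1n n g) x 1)
  /\ continuous (derive1n 3 g : R -> R).

Definition supnorm_der (r : nat) (g : R -> R) : \bar R :=
  ereal_sup [set (`|derive1n r g t|)%:E | t in [set: R]].

Definition Ukj (N p : nat) (beta : R) (m : 'M[R]_(N, p) -> R)
  (k1 k2 k3 : 'I_N) (j1 j2 j3 : 'I_p) (x : 'M[R]_(N, p)) : \bar R :=
  ereal_sup [set (`|partial k1 j1 (partial k2 j2 (partial k3 j3 m)) (x + y)|)%:E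
            | y in [set y : 'M[R]_(N, p) | forall a b, `|y a b| <= beta^-1]].

End Defs.

(* Main.v *)
Require Import Defs.
From HB Require Import structures.
From mathcomp Require Import all_boot all_order all_algebra.
From mathcomp Require Import all_classical all_reals all_analysis.
From mathcomp Require Import ring lra.
Import Order.TTheory GRing.Theory Num.Theory numFieldNormedType.Exports.
Set Implicit Arguments. Unset Strict Implicit. Unset Printing Implicit Defensive.
Local Open Scope ring_scope.

Section Frame.
Variables (R : realType) (N p : nat).
Local Notation M := 'M[R]_(N,p).

Definition hasD (E : M) (f f' : M -> R) := forall X : M,
  is_derive (0:R) (1:R) (fun t : R => f (X + t *: E)) (f' X).

Lemma hasD_eq E f f' f'' : hasD E f f' -> f' =1 f'' -> hasD E f f''.
Proof. by move=> H e X; rewrite -e; exact: H. Qed.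

Lemma hasD_cst E c : hasD E (fun _ => c) (fun _ => 0).
Proof. move=> X; exact: is_derive_cst. Qed.

Lemma hasD_add E f g f' g' : hasD E f f' -> hasD E g g' ->
  hasD E (fun X => f X + g X) (fun X => f' X + g' X).
Proof. move=> Hf Hg X; exact: is_deriveD. Qed.

Lemma hasD_mul E f g f' g' : hasD E f f' -> hasD E g g' ->
  hasD E (fun X => f X * g X) (fun X => f X * g' X + g X * f' X).
Proof.
move=> Hf Hg X; have H := is_deriveM (Hf X) (Hg X).
rewrite /= scale0r addr0 in H; exact: H.
Qed.

Lemma hasD_comp (E : M) (phi phi' : R -> R) (f f' : M -> R) :
  (forall t : R, is_derive t 1 phi (phi' t)) -> hasD E f f' ->
  hasD E (fun X => phi (f X)) (fun X => phi' (f X) * f' X).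
Proof.
move=> Hp Hf X.
have H := is_derive1_comp (f:=phi) (g:=fun t => f (X + t *: E)) (Hp _) (Hf X).
rewrite /= scale0r addr0 in H; exact: H.
Qed.

Lemma hasD_sum E n (f f' : 'I_n -> M -> R) :
  (forall i, hasD E (f i) (f' i)) ->
  hasD E (fun X => \sum_(i < n) f i X) (fun X => \sum_(i < n) f' i X).
Proof.
move=> H X.
have -> : (fun t : R => \sum_(i < n) f i (X + t *: E)) =
          \sum_(i < n) (fun t : R => f i (X + t *: E)).
  by apply/funext => t; rewrite fct_sumE.
apply: is_derive_sum => i; exact: H.
Qed.

Lemma hasD_inv E f f' : (forall X, f X != 0) -> hasD E f f' ->
  hasD E (fun X => (f X)^-1) (fun X => - (f X) ^- 2 * f' X).
Proof.
move=> nz Hf X; have H := is_deriveV _ (Hf X).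
rewrite /= scale0r addr0 in H; exact: H.
Qed.

Lemma hasD_entry E k j : hasD E (fun X => X k j) (fun _ => E k j).
Proof.
move=> X.
have -> : (fun t : R => (X + t *: E) k j) = (fun t => X k j + t * E k j).
  by apply/funext => t; rewrite !mxE.
have H1 := is_deriveM (is_derive_id (0:R) (1:R)) (is_derive_cst (E k j) (0:R) (1:R)).
rewrite /= scaler0 add0r [_%:A]mulr1 in H1.
have H2 := is_deriveD (is_derive_cst (X k j) (0:R) (1:R)) H1.
rewrite add0r in H2; exact: H2.
Qed.

Lemma partial_hasD k j f f' : hasD (delta_mx k j) f f' -> partial k j f = f'.
Proof. by move=> H; apply/funext => X; rewrite /partial derive1E; apply: (@derive_val _ _ _ _ _ _ _ (H X)). Qed.


Lemma hasD_opp E f f' : hasD E f f' -> hasD E (fun X => - f X) (fun X => - f' X).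
Proof. move=> Hf X; exact: is_deriveN. Qed.

Lemma hasD_ln (E : M) (f f' : M -> R) : (forall X, 0 < f X) -> hasD E f f' ->
  hasD E (fun X => ln (f X)) (fun X => (f X)^-1 * f' X).
Proof.
move=> pos Hf X.
have H := is_derive1_comp (f:=@ln R) (g:=fun t => f (X + t *: E)) (is_derive1_ln (pos _)) (Hf X).
rewrite /= scale0r addr0 in H; exact: H.
Qed.

End Frame.

Section Key.
Variable R : realType.
Lemma nm2 (x y X Y : R) : `|x| <= X -> `|y| <= Y -> `|x * y| <= X * Y.
Proof. by move=> hx hy; rewrite normrM; apply: ler_pM. Qed.

Lemma nmD (x y X Y : R) : `|x| <= X -> `|y| <= Y -> `|x + y| <= X + Y.
Proof. by move=> hx hy; apply: le_trans (ler_normD _ _) (lerD hx hy). Qed.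

Lemma nm0 (x X : R) : 0 <= x -> x <= X -> `|x| <= X.
Proof. by move=> h0 h1; rewrite ger0_norm. Qed.

Lemma key (G1 G2 G3 s1 s2 s3 b K q1 q2 q3 Q1 Q2 Q3 c12 c13 c23 C12 C13 C23
   d32 d21 w2 W2 dw Dw : R) :
  `|G1| <= s1 -> `|G2| <= s2 -> `|G3| <= s3 -> 0 < b ->
  0 <= q1 <= K * Q1 -> 0 <= q2 <= K * Q2 -> 0 <= q3 <= K * Q3 ->
  `|c12| <= K * C12 -> `|c13| <= K * C13 -> `|c23| <= K * C23 ->
  0 <= d32 -> 0 <= d21 -> 0 <= w2 <= K * W2 -> `|dw| <= K * Dw ->
  `|G3 * q1 * q2 * q3
  + G2 * b * (q2 * q3 * (c12 + c13) + q1 * q3 * c23)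
  + G1 * b ^+ 2 * (q3 * c13 * c23
      + q3 * (-2 * d32 * (d21 * w2 * dw) + q2 * c12))|
  <= K ^+ 3 * (s3 * (Q1 * Q2 * Q3)
     + s2 * b * (Q2 * Q3 * (C12 + C13) + Q1 * Q3 * C23)
     + s1 * b ^+ 2 * (Q3 * C13 * C23 + Q3 * (2 * d32 * (d21 * W2 * Dw) + Q2 * C12))).
Proof.
move=> hG1 hG2 hG3 hb /andP[q10 hq1] /andP[q20 hq2] /andP[q30 hq3] h12 h13 h23
  hd32 hd21 /andP[w20 hw2] hdw.
have n1 := nm0 q10 hq1; have n2 := nm0 q20 hq2; have n3 := nm0 q30 hq3.
have nw := nm0 w20 hw2.
have nb : `|b| <= b by rewrite gtr0_norm.
have nb2 : `|b ^+ 2| <= b ^+ 2 by rewrite ger0_norm // exprn_ge0 // ltW.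
have n2d : `|-2 * d32| <= 2 * d32 by rewrite normrM normrN ger0_norm // ger0_norm.
have nd21 : `|d21| <= d21 by rewrite ger0_norm.
apply: le_trans.
  apply: nmD; first apply: nmD.
  - apply: nm2 n3; apply: nm2 n2; exact: nm2 hG3 n1.
  - apply: nm2 (nm2 hG2 nb) _; apply: nmD.
      apply: nm2 (nm2 n2 n3) (nmD h12 h13).
    exact: nm2 (nm2 n1 n3) h23.
  - apply: nm2 (nm2 hG1 nb2) _; apply: nmD.
      exact: nm2 (nm2 n3 h13) h23.
    apply: nm2 n3 (nmD (nm2 n2d (nm2 (nm2 nd21 nw) hdw)) (nm2 n2 h12)).
rewrite le_eqVlt; apply/orP; left; apply/eqP; ring.
Qed.

End Key.

Section Model.
Variables (R : realType) (N p : nat) (beta : R) (mu : 'M[R]_(N,p)).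
Hypothesis beta_gt0 : 0 < beta.
Local Notation M := 'M[R]_(N,p).

Definition a k j (X : M) := expR (beta * (X k j + mu k j)).
Definition S k (X : M) := \sum_(j < p) a k j X.
Definition T (X : M) := \sum_(k < N) (S k X)^-1.
Definition w k j (X : M) := a k j X / S k X.
Definition pi k (X : M) := (S k X)^-1 / T X.
Definition q k j (X : M) := pi k X * w k j X.
Definition GG (X : M) := - (beta^-1 * ln (T X)).

Lemma a_gt0 k j X : 0 < a k j X.
Proof. exact: expR_gt0. Qed.

Lemma S_gt0 (j0 : 'I_p) k X : 0 < S k X.
Proof.
rewrite /S (bigD1 j0) //=.
have h1 := a_gt0 k j0 X.
have h2 : 0 <= \sum_(i < p | i != j0) a k i X.
  by apply: sumr_ge0 => i _; apply/ltW/a_gt0.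
lra.
Qed.

Lemma T_gt0 (k0 : 'I_N) (j0 : 'I_p) X : 0 < T X.
Proof.
rewrite /T (bigD1 k0) //=.
have h1 : 0 < (S k0 X)^-1 by rewrite invr_gt0; apply: S_gt0.
have h2 : 0 <= \sum_(i < N | i != k0) (S i X)^-1.
  by apply: sumr_ge0 => i _; rewrite invr_ge0; apply/ltW/(S_gt0 j0).
lra.
Qed.

Lemma Gbeta_eq (j0 : 'I_p) X : Gbeta beta mu X = GG X.
Proof.
rewrite /Gbeta /F0 /GG /T; congr (- (_ * ln _)); apply: eq_bigr => k _.
rewrite /Fmuk mulrN mulrA mulfV ?gt_eqF // mul1r expRN lnK //.
by rewrite posrE; apply: (S_gt0 j0).
Qed.

Lemma Da k j k' j' : hasD (delta_mx k j) (a k' j')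
  (fun X => beta * ((k' == k) && (j' == j))%:R * a k' j' X).
Proof.
apply: hasD_eq.
  apply: (hasD_comp (phi := expR) (phi' := expR)) => //.
  apply: hasD_mul; first exact: hasD_cst.
  apply: hasD_add; first exact: hasD_entry.
  exact: hasD_cst.
by move=> X /=; rewrite !mxE /a; ring.
Qed.

Lemma DS k j k' : hasD (delta_mx k j) (S k')
  (fun X => beta * (k' == k)%:R * a k j X).
Proof.
apply: hasD_eq; first exact: (hasD_sum (fun j' => Da k j k' j')).
move=> X /=; case: (eqVneq k' k) => [->|ne].
  rewrite (bigD1 j) //= !eqxx big1 ?addr0 // => j' /negbTE ->.
  by rewrite mulr0 mul0r.
by rewrite big1 ?mulr0 ?mul0r // => j' _; rewrite /= mulr0 mul0r.
Qed.


Lemma DT k j : hasD (delta_mx k j) T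
  (fun X => - beta * (S k X)^-2 * a k j X).
Proof.
apply: hasD_eq.
  apply: (hasD_sum (f := fun k' X => (S k' X)^-1)) => k'.
  apply: hasD_inv; last exact: DS.
  by move=> X; rewrite gt_eqF //; apply: (S_gt0 j).
move=> X /=; rewrite (bigD1 k) //= eqxx big1 ?addr0.
  by rewrite mulr1; ring.
by move=> k' /negbTE ->; rewrite mulr0 mul0r mulr0.
Qed.

Lemma DG k j : hasD (delta_mx k j) GG (q k j).
Proof.
apply: hasD_eq.
  apply: hasD_opp; apply: hasD_mul; first exact: hasD_cst.
  apply: hasD_ln; last exact: DT.
  exact: (T_gt0 k j).
move=> X /=; rewrite /q /pi /w.
have h1 := S_gt0 j k X; have h2 := T_gt0 k j X.
field; rewrite ?gt_eqF //.
Qed.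

Lemma Dw k j k' j' : hasD (delta_mx k j) (w k' j')
  (fun X => beta * (k' == k)%:R * w k' j' X * ((j' == j)%:R - w k j X)).
Proof.
apply: hasD_eq.
  apply: hasD_mul; first exact: Da.
  apply: hasD_inv; last exact: DS.
  by move=> X; rewrite gt_eqF //; apply: (S_gt0 j).
move=> X /=; rewrite /w.
case: (eqVneq k' k) => [->|ne] /=.
  by have h1 := S_gt0 j k X; field; rewrite gt_eqF.
ring.
Qed.

Lemma Dpi k j k' : hasD (delta_mx k j) (pi k')
  (fun X => beta * pi k' X * w k j X * (pi k X - (k' == k)%:R)).
Proof.
apply: hasD_eq.
  apply: hasD_mul.
    apply: hasD_inv; last exact: DS.
    by move=> X; rewrite gt_eqF //; apply: (S_gt0 j).
  apply: hasD_inv; last exact: DT.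
  by move=> X; rewrite gt_eqF //; apply: (T_gt0 k j).
move=> X /=; rewrite /pi /w.
have h2 := S_gt0 j k X; have h3 := T_gt0 k j X.
case: (eqVneq k' k) => [->|ne] /=.
  by field; rewrite !gt_eqF.
by have h1 := S_gt0 j k' X; field; rewrite !gt_eqF.
Qed.

Lemma Dq k j k' j' : hasD (delta_mx k j) (q k' j')
  (fun X => beta * q k' j' X * ((k' == k)%:R * (j' == j)%:R
             - 2 * (k' == k)%:R * w k j X + q k j X)).
Proof.
apply: hasD_eq; first exact: hasD_mul (Dpi k j k') (Dw k j k' j').
move=> X /=; rewrite /q.
case: (eqVneq k' k) => [->|ne] /=; ring.
Qed.


Definition c k j k' j' (X : M) := (k' == k)%:R * (j' == j)%:R
             - 2 * (k' == k)%:R * w k j X + q k j X.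

Lemma Dc k1 j1 k2 j2 k3 j3 : hasD (delta_mx k1 j1) (c k2 j2 k3 j3)
  (fun X => -2 * (k3 == k2)%:R * (beta * (k2 == k1)%:R * w k2 j2 X *
     ((j2 == j1)%:R - w k1 j1 X)) + beta * q k2 j2 X * c k1 j1 k2 j2 X).
Proof.
apply: hasD_eq.
  apply: hasD_add; last exact: Dq.
  apply: hasD_add; first exact: hasD_cst.
  apply: hasD_opp; apply: hasD_mul; first exact: hasD_cst.
  exact: Dw.
by move=> X /=; rewrite /c; ring.
Qed.

Lemma inv_le (u v : R) : 0 < v -> v <= u -> u^-1 <= v^-1.
Proof. by move=> v0 vu; rewrite lef_pV2 ?posrE // (lt_le_trans v0 vu). Qed.

Section Shift.
Variables (x y : M).
Hypothesis hy : forall k j, `|y k j| <= beta^-1.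
Local Notation e := (expR (1:R)).

Lemma e_gt0 : 0 < e. Proof. exact: expR_gt0. Qed.

Lemma ey_le k j : expR (beta * y k j) <= e.
Proof.
rewrite ler_expR; have := hy k j; rewrite ler_norml => /andP[_ h].
by rewrite -(mulfV (lt0r_neq0 beta_gt0)) ler_pM2l.
Qed.

Lemma ey_ge k j : e^-1 <= expR (beta * y k j).
Proof.
rewrite -expRN ler_expR; have := hy k j; rewrite ler_norml => /andP[h _].
by rewrite -(mulfV (lt0r_neq0 beta_gt0)) -mulrN ler_pM2l.
Qed.

Lemma a_shift k j : a k j (x + y) = a k j x * expR (beta * y k j).
Proof. by rewrite /a !mxE -expRD; congr expR; ring. Qed.

Lemma a_up k j : a k j (x + y) <= e * a k j x.
Proof. by rewrite a_shift [e * _]mulrC ler_pM2l ?a_gt0 // ey_le. Qed.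

Lemma a_lo k j : e^-1 * a k j x <= a k j (x + y).
Proof. by rewrite a_shift [e^-1 * _]mulrC ler_pM2l ?a_gt0 // ey_ge. Qed.

Lemma S_up k : S k (x + y) <= e * S k x.
Proof. by rewrite /S mulr_sumr; apply: ler_sum => j _; exact: a_up. Qed.

Lemma S_lo k : e^-1 * S k x <= S k (x + y).
Proof. by rewrite /S mulr_sumr; apply: ler_sum => j _; exact: a_lo. Qed.

Lemma w_up (j0 : 'I_p) k j : w k j (x + y) <= e ^+ 2 * w k j x.
Proof.
have hS := S_gt0 j0 k x; have he := e_gt0.
rewrite /w; apply: le_trans.
  apply: (ler_pM (y1 := e * a k j x) (y2 := (e^-1 * S k x)^-1)).
  - exact: ltW (a_gt0 _ _ _).
  - by rewrite invr_ge0; apply/ltW/(S_gt0 j0).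
  - exact: a_up.
  - apply: inv_le; last exact: S_lo.
    by rewrite mulr_gt0 // invr_gt0.
rewrite le_eqVlt; apply/orP; left; apply/eqP; field.
by rewrite !gt_eqF.
Qed.

Lemma T_lo (k0 : 'I_N) (j0 : 'I_p) : e^-1 * T x <= T (x + y).
Proof.
have he := e_gt0.
rewrite /T mulr_sumr; apply: ler_sum => k _.
have hS := S_gt0 j0 k x.
apply: le_trans (inv_le _ (S_up k)); last exact: (S_gt0 j0).
by rewrite invfM.
Qed.

Lemma pi_up (j0 : 'I_p) k : pi k (x + y) <= e ^+ 2 * pi k x.
Proof.
have hS := S_gt0 j0 k x; have he := e_gt0; have hT := T_gt0 k j0 x.
rewrite /pi; apply: le_trans.
  apply: (ler_pM (y1 := (e^-1 * S k x)^-1) (y2 := (e^-1 * T x)^-1)).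
  - by rewrite invr_ge0; apply/ltW/(S_gt0 j0).
  - by rewrite invr_ge0; apply/ltW/(T_gt0 k j0).
  - by apply: inv_le; [rewrite mulr_gt0 // invr_gt0 | exact: S_lo].
  - by apply: inv_le; [rewrite mulr_gt0 // invr_gt0 | exact: T_lo].
rewrite le_eqVlt; apply/orP; left; apply/eqP; field.
by rewrite !gt_eqF.
Qed.

End Shift.

Lemma w_ge0 (j0 : 'I_p) k j X : 0 <= w k j X.
Proof. by rewrite /w divr_ge0 //; apply/ltW; [exact: a_gt0 | exact: (S_gt0 j0)]. Qed.

Lemma pi_ge0 (j0 : 'I_p) k X : 0 <= pi k X.
Proof.
rewrite /pi divr_ge0 //; apply/ltW; first by rewrite invr_gt0; exact: (S_gt0 j0).
exact: (T_gt0 k j0).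
Qed.

Lemma q_ge0 (j0 : 'I_p) k j X : 0 <= q k j X.
Proof. by rewrite /q mulr_ge0 //; [exact: (pi_ge0 j0) | exact: (w_ge0 j0)]. Qed.

Local Notation e := (expR (1:R)).
Local Notation K := (expR (1:R) ^+ 4).

Lemma e_ge1 : 1 <= e.
Proof. by have := expR_ge1Dx (1:R); apply: le_trans; rewrite lerDl. Qed.

Lemma e2K : e ^+ 2 <= K.
Proof.
have h := e_ge1; have h0 : 0 <= e by lra.
rewrite (_ : K = e ^+ 2 * e ^+ 2); last by rewrite -exprD.
by rewrite ler_peMr ?exprn_ege1 ?exprn_ge0.
Qed.

Lemma K_ge1 : 1 <= K.
Proof. by rewrite exprn_ege1 // e_ge1. Qed.

Definition C k j k' j' (X : M) := (k' == k)%:R * (j' == j)%:R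
             + 2 * (k' == k)%:R * w k j X + q k j X.

Section Shift2.
Variables (x y : M) (j0 : 'I_p).
Hypothesis hy : forall k j, `|y k j| <= beta^-1.

Lemma w_upK k j : w k j (x + y) <= K * w k j x.
Proof.
apply: le_trans (w_up x hy j0 k j) _.
by apply: ler_wpM2r; [exact: (w_ge0 j0) | exact: e2K].
Qed.

Lemma q_upK k j : q k j (x + y) <= K * q k j x.
Proof.
rewrite /q (_ : K = e ^+ 2 * e ^+ 2); last by rewrite -exprD.
rewrite [X in _ <= X]mulrACA; apply: ler_pM.
- exact: (pi_ge0 j0).
- exact: (w_ge0 j0).
- exact: (pi_up x hy j0).
- exact: (w_up x hy j0).
Qed.

Lemma c_bound k j k' j' : `|c k j k' j' (x + y)| <= K * C k j k' j' x.
Proof.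
rewrite /c /C.
have hw := w_upK k j; have hq := q_upK k j.
have w0 := w_ge0 j0 k j (x + y); have q0 := q_ge0 j0 k j (x + y).
have hK := K_ge1.
have d10 : 0 <= (k' == k)%:R :> R by case: (k' == k).
have d11 : (k' == k)%:R <= 1 :> R by case: (k' == k).
have d20 : 0 <= (j' == j)%:R :> R by case: (j' == j).
have d21 : (j' == j)%:R <= 1 :> R by case: (j' == j).
set D1 := (k' == k)%:R in d10 d11 *; set D2 := (j' == j)%:R in d20 d21 *.
set W := w k j (x + y) in hw w0 *; set Q := q k j (x + y) in hq q0 *.
set W' := w k j x in hw *; set Q' := q k j x in hq *.
have hDD : 0 <= D1 * D2 by rewrite mulr_ge0.
have hDW : 0 <= D1 * W by rewrite mulr_ge0.
have hDW' : D1 * W <= D1 * (K * W') by rewrite ler_wpM2l.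
have hKDD : D1 * D2 <= K * (D1 * D2) by rewrite ler_peMl.
rewrite ler_norml; apply/andP; split; nra.
Qed.

Lemma dw_bound k1 j1 j2 : `|(j2 == j1)%:R - w k1 j1 (x + y)| <= K * ((j2 == j1)%:R + w k1 j1 x).
Proof.
have hw := w_upK k1 j1; have w0 := w_ge0 j0 k1 j1 (x + y).
have hK := K_ge1.
have d20 : 0 <= (j2 == j1)%:R :> R by case: (j2 == j1).
have d21 : (j2 == j1)%:R <= 1 :> R by case: (j2 == j1).
set D := (j2 == j1)%:R in d20 d21 *.
set W := w k1 j1 (x + y) in hw w0 *; set W' := w k1 j1 x in hw *.
have hKD : D <= K * D by rewrite ler_peMl.
rewrite ler_norml; apply/andP; split; nra.
Qed.

End Shift2.

Lemma sum_delta n (i0 : 'I_n) (F : 'I_n -> R) :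
  \sum_(i < n) (i0 == i)%:R * F i = F i0.
Proof.
rewrite (bigD1 i0) //= eqxx mul1r big1 ?addr0 // => i /negbTE.
by rewrite eq_sym => ->; rewrite mul0r.
Qed.

Lemma sum_delta1 n (i0 : 'I_n) : \sum_(i < n) (i0 == i)%:R = 1 :> R.
Proof.
rewrite -[RHS](sum_delta i0 (fun _ => 1)); apply: eq_bigr => i _; by rewrite mulr1.
Qed.

Lemma sum_w (j0 : 'I_p) k X : \sum_(j < p) w k j X = 1.
Proof.
rewrite /w -mulr_suml -/(S k X) mulfV //.
by rewrite gt_eqF //; exact: (S_gt0 j0).
Qed.

Lemma sum_q (k0 : 'I_N) (j0 : 'I_p) X : \sum_(k < N) \sum_(j < p) q k j X = 1.
Proof.
under eq_bigr => k _ do rewrite /q -mulr_sumr (sum_w j0) mulr1.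
rewrite /pi -mulr_suml -/(T X) mulfV //.
by rewrite gt_eqF //; exact: (T_gt0 k0 j0).
Qed.

Lemma lin4 (A0 A1 A2 A3 : R) (f0 f1 f2 f3 : 'I_N -> 'I_p -> R) :
  \sum_(k < N) \sum_(j < p) (A0 * f0 k j + A1 * f1 k j + A2 * f2 k j + A3 * f3 k j)
  = A0 * (\sum_(k < N) \sum_(j < p) f0 k j) + A1 * (\sum_(k < N) \sum_(j < p) f1 k j)
  + A2 * (\sum_(k < N) \sum_(j < p) f2 k j) + A3 * (\sum_(k < N) \sum_(j < p) f3 k j).
Proof.
rewrite !mulr_sumr -!big_split /=; apply: eq_bigr => k _.
by rewrite !mulr_sumr -!big_split.
Qed.

Lemma sum_C (k0 : 'I_N) (j0 : 'I_p) k' j' X :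
  \sum_(k < N) \sum_(j < p) C k j k' j' X = 4.
Proof.
rewrite /C.
have -> : \sum_(k < N) \sum_(j < p) ((k' == k)%:R * (j' == j)%:R + 2 * (k' == k)%:R * w k j X + q k j X)
   = \sum_(k < N) \sum_(j < p) (1 * ((k' == k)%:R * (j' == j)%:R) + 2 * ((k' == k)%:R * w k j X) + 1 * q k j X + 0 * 0).
  by apply: eq_bigr => k _; apply: eq_bigr => j _; ring.
rewrite lin4 (sum_q k0 j0).
under eq_bigr => k _ do rewrite -mulr_sumr sum_delta1 mulr1.
rewrite sum_delta1.
under eq_bigr => k _ do rewrite -mulr_sumr (sum_w j0).
rewrite sum_delta; ring.
Qed.

Lemma sum_D (j0 : 'I_p) k2 j2 X :
  \sum_(k1 < N) \sum_(j1 < p) ((k2 == k1)%:R * ((j2 == j1)%:R + w k1 j1 X)) = 2.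
Proof.
under eq_bigr => k _ do rewrite -mulr_sumr big_split /= (sum_w j0) sum_delta1.
by rewrite sum_delta.
Qed.

Lemma sum_dW (j0 : 'I_p) k3 X :
  \sum_(k2 < N) \sum_(j2 < p) ((k3 == k2)%:R * w k2 j2 X) = 1.
Proof.
under eq_bigr => k _ do rewrite -mulr_sumr (sum_w j0).
by rewrite sum_delta.
Qed.

Section Bound.
Variables (s1 s2 s3 : R).

Definition B k1 j1 k2 j2 k3 j3 (X : M) :=
  s3 * (q k1 j1 X * q k2 j2 X * q k3 j3 X)
  + s2 * beta * (q k2 j2 X * q k3 j3 X * (C k1 j1 k2 j2 X + C k1 j1 k3 j3 X)
                 + q k1 j1 X * q k3 j3 X * C k2 j2 k3 j3 X)
  + s1 * beta ^+ 2 * (q k3 j3 X * C k1 j1 k3 j3 X * C k2 j2 k3 j3 X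
      + q k3 j3 X * (2 * (k3 == k2)%:R * ((k2 == k1)%:R * w k2 j2 X *
          ((j2 == j1)%:R + w k1 j1 X)) + q k2 j2 X * C k1 j1 k2 j2 X)).

Lemma sumB (k0 : 'I_N) (j0 : 'I_p) X :
  \sum_(k3 < N) \sum_(j3 < p) \sum_(k2 < N) \sum_(j2 < p) \sum_(k1 < N) \sum_(j1 < p)
     B k1 j1 k2 j2 k3 j3 X = s3 + 12 * beta * s2 + 24 * beta ^+ 2 * s1.
Proof.
have e1 : forall k3 j3 k2 j2, \sum_(k1 < N) \sum_(j1 < p) B k1 j1 k2 j2 k3 j3 X =
   (s3 * q k3 j3 X + 8 * s2 * beta * q k3 j3 X + 4 * s1 * beta ^+ 2 * q k3 j3 X) * q k2 j2 X
   + (s2 * beta * q k3 j3 X + 4 * s1 * beta ^+ 2 * q k3 j3 X) * C k2 j2 k3 j3 X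
   + (4 * s1 * beta ^+ 2 * q k3 j3 X) * ((k3 == k2)%:R * w k2 j2 X) + 0 * 0.
  move=> k3 j3 k2 j2.
  have -> : \sum_(k1 < N) \sum_(j1 < p) B k1 j1 k2 j2 k3 j3 X =
    \sum_(k1 < N) \sum_(j1 < p)
     ((s3 * q k2 j2 X * q k3 j3 X + s2 * beta * q k3 j3 X * C k2 j2 k3 j3 X) * q k1 j1 X
     + (s2 * beta * q k2 j2 X * q k3 j3 X + s1 * beta ^+ 2 * q k3 j3 X * q k2 j2 X) * C k1 j1 k2 j2 X
     + (s2 * beta * q k2 j2 X * q k3 j3 X + s1 * beta ^+ 2 * q k3 j3 X * C k2 j2 k3 j3 X) * C k1 j1 k3 j3 X
     + (s1 * beta ^+ 2 * q k3 j3 X * 2 * (k3 == k2)%:R * w k2 j2 X) *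
         ((k2 == k1)%:R * ((j2 == j1)%:R + w k1 j1 X))).
    by apply: eq_bigr => k1 _; apply: eq_bigr => j1 _; rewrite /B; ring.
  rewrite lin4 (sum_q k0 j0) !(sum_C k0 j0) (sum_D j0); ring.
under eq_bigr => k3 _ do under eq_bigr => j3 _ do under eq_bigr => k2 _ do
  under eq_bigr => j2 _ do rewrite e1.
under eq_bigr => k3 _ do under eq_bigr => j3 _ do
  rewrite (lin4 _ _ _ _ _ _ _ (fun _ _ => 0)) (sum_q k0 j0) (sum_C k0 j0) (sum_dW j0).
have -> : \sum_(k3 < N) \sum_(j3 < p)
  ((s3 * q k3 j3 X + 8 * s2 * beta * q k3 j3 X + 4 * s1 * beta ^+ 2 * q k3 j3 X) * 1 +
   (s2 * beta * q k3 j3 X + 4 * s1 * beta ^+ 2 * q k3 j3 X) * 4 +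
   4 * s1 * beta ^+ 2 * q k3 j3 X * 1 +
   0 * (\sum_(k < N) \sum_(j < p) 0)) =
  \sum_(k3 < N) \sum_(j3 < p) ((s3 + 12 * beta * s2 + 24 * beta ^+ 2 * s1) * q k3 j3 X + 0 * 0 + 0 * 0 + 0 * 0).
  by apply: eq_bigr => k3 _; apply: eq_bigr => j3 _; ring.
rewrite (lin4 _ _ _ _ _ (fun _ _ => 0) (fun _ _ => 0) (fun _ _ => 0)) (sum_q k0 j0); ring.
Qed.

End Bound.

Section Deriv.
Variable g : R -> R.
Hypothesis Hg : forall n, (n < 3)%N -> forall t : R,
  is_derive t 1 (derive1n n g) (derive1n n.+1 g t).

Local Notation g1 := (derive1n 1 g).
Local Notation g2 := (derive1n 2 g).
Local Notation g3 := (derive1n 3 g).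

Definition P3 k3 j3 (X : M) := g1 (GG X) * q k3 j3 X.
Definition P23 k2 j2 k3 j3 (X : M) := g2 (GG X) * q k2 j2 X * q k3 j3 X
   + g1 (GG X) * (beta * q k3 j3 X * c k2 j2 k3 j3 X).
Definition F123 k1 j1 k2 j2 k3 j3 (X : M) :=
  g3 (GG X) * q k1 j1 X * q k2 j2 X * q k3 j3 X
  + g2 (GG X) * beta * (q k2 j2 X * q k3 j3 X * (c k1 j1 k2 j2 X + c k1 j1 k3 j3 X)
                        + q k1 j1 X * q k3 j3 X * c k2 j2 k3 j3 X)
  + g1 (GG X) * beta ^+ 2 * (q k3 j3 X * c k1 j1 k3 j3 X * c k2 j2 k3 j3 X
      + q k3 j3 X * (-2 * (k3 == k2)%:R * ((k2 == k1)%:R * w k2 j2 X *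
          ((j2 == j1)%:R - w k1 j1 X)) + q k2 j2 X * c k1 j1 k2 j2 X)).

Lemma hasD_g n k j : (n < 3)%N -> hasD (delta_mx k j) (fun X => derive1n n g (GG X))
  (fun X => derive1n n.+1 g (GG X) * q k j X).
Proof. by move=> hn; apply: hasD_comp; [exact: Hg | exact: DG]. Qed.

Lemma part3 k3 j3 : partial k3 j3 (fun X => g (GG X)) = P3 k3 j3.
Proof. apply: partial_hasD; have := @hasD_g 0%N k3 j3 isT; rewrite derive1n0; exact. Qed.

Lemma part23 k2 j2 k3 j3 : partial k2 j2 (P3 k3 j3) = P23 k2 j2 k3 j3.
Proof.
apply: partial_hasD; apply: hasD_eq.
  apply: hasD_mul; first exact: (@hasD_g 1%N _ _ isT).
  exact: Dq.
by move=> X; rewrite /P23 /c; ring.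
Qed.

Lemma part123 k1 j1 k2 j2 k3 j3 :
  partial k1 j1 (P23 k2 j2 k3 j3) = F123 k1 j1 k2 j2 k3 j3.
Proof.
apply: partial_hasD; apply: hasD_eq.
  apply: hasD_add.
    apply: hasD_mul; last exact: Dq.
    apply: hasD_mul; first exact: (@hasD_g 2%N _ _ isT).
    exact: Dq.
  apply: hasD_mul; first exact: (@hasD_g 1%N _ _ isT).
  apply: hasD_mul; last exact: Dc.
  apply: hasD_mul; first exact: hasD_cst.
  exact: Dq.
by move=> X; rewrite /F123 /c; ring.
Qed.

Lemma F123_bound (s1 s2 s3 : R) :
  (forall t, `|g1 t| <= s1) -> (forall t, `|g2 t| <= s2) -> (forall t, `|g3 t| <= s3) ->
  forall (x y : M), (forall k j, `|y k j| <= beta^-1) ->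
  forall k1 j1 k2 j2 k3 j3,
  `|F123 k1 j1 k2 j2 k3 j3 (x + y)| <= K ^+ 3 * B s1 s2 s3 k1 j1 k2 j2 k3 j3 x.
Proof.
move=> hs1 hs2 hs3 x y hy k1 j1 k2 j2 k3 j3.
rewrite /F123 /B; apply: key => //.
- by apply/andP; split; [exact: (q_ge0 j1) | exact: (q_upK x j1 hy)].
- by apply/andP; split; [exact: (q_ge0 j1) | exact: (q_upK x j1 hy)].
- by apply/andP; split; [exact: (q_ge0 j1) | exact: (q_upK x j1 hy)].
- exact: (c_bound x j1 hy).
- exact: (c_bound x j1 hy).
- exact: (c_bound x j1 hy).
- by apply/andP; split; [exact: (w_ge0 j1) | exact: (w_upK x j1 hy)].
- exact: (dw_bound x j1 hy).
Qed.

End Deriv.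

End Model.

Lemma reorder (R : realType) (N p : nat) (c : R)
  (F : 'I_N -> 'I_p -> 'I_N -> 'I_p -> 'I_N -> 'I_p -> R) :
  \sum_(k1 < N) \sum_(k2 < N) \sum_(k3 < N) \sum_(j1 < p) \sum_(j2 < p) \sum_(j3 < p)
     (c * F k1 j1 k2 j2 k3 j3)
  = c * \sum_(k3 < N) \sum_(j3 < p) \sum_(k2 < N) \sum_(j2 < p) \sum_(k1 < N) \sum_(j1 < p)
     F k1 j1 k2 j2 k3 j3.
Proof.
etransitivity.
  apply: eq_bigr => k1 _; apply: eq_bigr => k2 _; apply: eq_bigr => k3 _;
  apply: eq_bigr => j1 _; apply: eq_bigr => j2 _; rewrite -mulr_sumr; reflexivity.
etransitivity.
  apply: eq_bigr => k1 _; apply: eq_bigr => k2 _; apply: eq_bigr => k3 _;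
  apply: eq_bigr => j1 _; rewrite -mulr_sumr; reflexivity.
etransitivity.
  apply: eq_bigr => k1 _; apply: eq_bigr => k2 _; apply: eq_bigr => k3 _;
  rewrite -mulr_sumr; reflexivity.
etransitivity.
  apply: eq_bigr => k1 _; apply: eq_bigr => k2 _; rewrite -mulr_sumr; reflexivity.
etransitivity.
  apply: eq_bigr => k1 _; rewrite -mulr_sumr; reflexivity.
rewrite -mulr_sumr; congr (_ * _).
etransitivity.
  apply: eq_bigr => k1 _; exact: exchange_big.
etransitivity; first exact: exchange_big.
etransitivity.
  apply: eq_bigr => k3 _; apply: eq_bigr => k1 _; apply: eq_bigr => k2 _;
  apply: eq_bigr => j1 _; exact: exchange_big.
etransitivity.
  apply: eq_bigr => k3 _; apply: eq_bigr => k1 _; apply: eq_bigr => k2 _;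
  exact: exchange_big.
etransitivity.
  apply: eq_bigr => k3 _; apply: eq_bigr => k1 _; exact: exchange_big.
etransitivity.
  apply: eq_bigr => k3 _; exact: exchange_big.
etransitivity.
  apply: eq_bigr => k3 _; apply: eq_bigr => j3 _; exact: exchange_big.
etransitivity.
  apply: eq_bigr => k3 _; apply: eq_bigr => j3 _; apply: eq_bigr => k2 _;
  apply: eq_bigr => k1 _; exact: exchange_big.
apply: eq_bigr => k3 _; apply: eq_bigr => j3 _; apply: eq_bigr => k2 _;
exact: exchange_big.
Qed.

Lemma rhs_oo (R : realType) (a b c : \bar R) (u v w : R) :
  0 < u -> 0 < v -> 0 < w -> (0 <= a)%E -> (0 <= b)%E -> (0 <= c)%E ->
  (a = +oo \/ b = +oo \/ c = +oo)%E ->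
  (u%:E * (a + v%:E * b + w%:E * c) = +oo)%E.
Proof.
move=> u0 v0 w0 a0 b0 c0 H.
have vb0 : (0 <= v%:E * b)%E by rewrite mule_ge0 // lee_fin ltW.
have wc0 : (0 <= w%:E * c)%E by rewrite mule_ge0 // lee_fin ltW.
suff -> : (a + v%:E * b + w%:E * c = +oo)%E by rewrite muleC gt0_mulye ?lte_fin.
apply/eqP; rewrite eq_le leey /=.
case: H => [->|[->|->]].
- by rewrite addeC (addeC _ (v%:E * b)%E); apply: lee_paddl => //; apply: lee_paddl.
- rewrite addeC; apply: lee_paddl => //; apply: lee_paddl => //.
  by rewrite muleC gt0_mulye ?lte_fin.
- by apply: lee_paddl => //; [rewrite adde_ge0 | rewrite muleC gt0_mulye ?lte_fin].
Qed.

Unset Implicit Arguments.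
Set Strict Implicit.

Theorem lemmaF4 (R : realType) (N p : nat) (beta : R) (mu : 'M[R]_(N, p))
  (g : R -> R) :
  0 < beta -> C3 g ->
  forall x : 'M[R]_(N, p),
  (\sum_(k1 < N) \sum_(k2 < N) \sum_(k3 < N)
     \sum_(j1 < p) \sum_(j2 < p) \sum_(j3 < p)
       Ukj beta (fun X => g (Gbeta beta mu X)) k1 k2 k3 j1 j2 j3 x
   <= (expR 12)%:E * (supnorm_der 3 g + (16 * beta)%:E * supnorm_der 2 g
                       + (24 * beta ^+ 2)%:E * supnorm_der 1 g))%E.
Proof.
move=> hb [hder _] x.
have Hg : forall n, (n < 3)%N -> forall t : R,
    is_derive t 1 (derive1n n g) (derive1n n.+1 g t).
  by move=> n hn t; rewrite derive1nS derive1E; exact: derivableP (hder n hn t).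
have sup_ge : forall r t, ((`|derive1n r g t|)%:E <= supnorm_der r g)%E.
  by move=> r t; apply: ereal_sup_ubound; exists t.
have sup_ge0 : forall r, (0 <= supnorm_der r g)%E.
  by move=> r; apply: le_trans (sup_ge r 0); rewrite lee_fin.
have fin_or_inf : forall r, (exists s, supnorm_der r g = s%:E) \/ supnorm_der r g = +oo%E.
  move=> r; have := sup_ge0 r; case: (supnorm_der r g) => [s| |] //= _.
  - by left; exists s.
  - by right.
have e12 : 0 < expR 12 :> R by exact: expR_gt0.
have b16 : 0 < 16 * beta by rewrite mulr_gt0.
have b24 : 0 < 24 * beta ^+ 2 by rewrite mulr_gt0 // exprn_gt0.
case: (fin_or_inf 3%N) => [[s3 E3]|E3]; last first.
  by rewrite rhs_oo ?leey ?sup_ge0 //; left.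
case: (fin_or_inf 2%N) => [[s2 E2]|E2]; last first.
  by rewrite rhs_oo ?leey ?sup_ge0 //; right; left.
case: (fin_or_inf 1%N) => [[s1 E1]|E1]; last first.
  by rewrite rhs_oo ?leey ?sup_ge0 //; right; right.
have hs : forall r s, supnorm_der r g = s%:E -> forall t, `|derive1n r g t| <= s.
  by move=> r s Er t; have := sup_ge r t; rewrite Er lee_fin.
have s2ge0 : 0 <= s2 by apply: le_trans (hs 2%N s2 E2 0).
have s1ge0 : 0 <= s1 by apply: le_trans (hs 1%N s1 E1 0).
have s3ge0 : 0 <= s3 by apply: le_trans (hs 3%N s3 E3 0).
have rhs0 : (0 <= (expR 12)%:E * (supnorm_der 3 g + (16 * beta)%:E * supnorm_der 2 g
                       + (24 * beta ^+ 2)%:E * supnorm_der 1 g))%E.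
  rewrite E1 E2 E3 -!EFinM lee_fin.
  apply: mulr_ge0; first exact: ltW.
  have h1 : 0 <= 16 * beta * s2 by rewrite mulr_ge0 // ltW.
  have h2 : 0 <= 24 * beta ^+ 2 * s1 by rewrite mulr_ge0 // ltW.
  lra.
case: (posnP N) => [N0|hN].
  by subst N; rewrite big_ord0.
case: (posnP p) => [p0|hp].
  subst p; rewrite big1 // => k1 _; rewrite big1 // => k2 _; rewrite big1 // => k3 _.
  by rewrite big_ord0.
pose k0 : 'I_N := Ordinal hN; pose j0 : 'I_p := Ordinal hp.
have hm : (fun X => g (Gbeta beta mu X)) = (fun X => g (GG beta mu X)).
  by apply/funext => X; rewrite (Gbeta_eq mu hb j0).
apply: (@le_trans _ _ ((\sum_(k1 < N) \sum_(k2 < N) \sum_(k3 < N)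
     \sum_(j1 < p) \sum_(j2 < p) \sum_(j3 < p)
     ((expR 1 ^+ 4) ^+ 3 * B beta mu s1 s2 s3 k1 j1 k2 j2 k3 j3 x))%:E)).
  rewrite -sumEFin; apply: lee_sum => k1 _; rewrite -sumEFin; apply: lee_sum => k2 _.
  rewrite -sumEFin; apply: lee_sum => k3 _; rewrite -sumEFin; apply: lee_sum => j1 _.
  rewrite -sumEFin; apply: lee_sum => j2 _; rewrite -sumEFin; apply: lee_sum => j3 _.
  rewrite /Ukj; apply: ge_ereal_sup => _ [y hy <-]; rewrite lee_fin.
  rewrite hm (part3 mu hb Hg) (part23 mu hb Hg) (part123 mu hb Hg).
  exact: (F123_bound mu hb (hs 1%N s1 E1) (hs 2%N s2 E2) (hs 3%N s3 E3) x hy).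
rewrite reorder (sumB _ _ _ _ _ k0 j0).
rewrite E1 E2 E3 -!EFinM lee_fin.
have -> : expR 1 ^+ 4 ^+ 3 = expR 12 :> R.
  by rewrite -exprM -expRM_natl mulr1.
apply: ler_wpM2l; first exact: ltW.
have : 0 <= beta * s2 by rewrite mulr_ge0 // ltW.
lra.
Qed.
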